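(* For every prime power $q$ and every integer $n\ge1$, $$\sum_{\lambda\vdash n}\frac{\prod_{s=1}^{\ell(\lambda)-1}(1-q^s)}{a_\lambda(q)}=\frac{1}{q^n-1}.$$
   Context: The sum runs over all partitions $\lambda=(\lambda_1\ge\dots\ge\lambda_m\ge1)$ of $n$; $\ell(\lambda)=m$ is the length; empty products equal $1$. Writing $t_i$ for the number of parts of $\lambda$ equal to $i$, $|\lambda|=\sum_i\lambda_i$ and $n(\lambda)=\sum_{i=1}^{m}(i-1)\lambda_i$, one sets $a_\lambda(q)=q^{|\lambda|+2n(\lambda)}\prod_{i\ge1}\prod_{j=1}^{t_i}(1-q^{-j})$; this equals the order of the automorphism group of the $\mathbb F_q[T]$-module $\bigoplus_{i=1}^m\mathbb F_q[T]/(T^{\lambda_i})$. *)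

(* Defs.v *)
From mathcomp Require Import all_boot all_order all_algebra.
Set Implicit Arguments. Unset Strict Implicit. Unset Printing Implicit Defensive.
Import GRing.Theory Num.Theory.
Local Open Scope ring_scope.

Definition prime_power (q : nat) : Prop :=
  exists p k : nat, [/\ prime p, (0 < k)%N & q = (p ^ k)%N].

(* A partition of n is encoded (bijectively) as a nonincreasing n-tuple of
   values in {0,...,n} summing to n: the parts are the nonzero entries
   (a partition of n has at most n parts, each at most n). *)
Definition is_part_tuple (n : nat) (t : n.-tuple 'I_n.+1) : bool :=
  sorted geq [seq val i | i <- t] && (sumn [seq val i | i <- t] == n).

Definition parts (n : nat) (t : n.-tuple 'I_n.+1) : seq nat :=
  [seq x <- [seq val i | i <- t] | (0 < x)%N].

Definition nlam (lam : seq nat) : nat :=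
  (\sum_(i < size lam) i * nth 0 lam i)%N.

(* a_lambda(q) = q^{|lambda| + 2 n(lambda)} prod_{i>=1} prod_{j=1}^{t_i} (1 - q^{-j}),
   with t_i = multiplicity of i in lambda; every part is <= |lambda|, so the
   factors with i > |lambda| are empty products. *)
Definition a_lam (q : rat) (lam : seq nat) : rat :=
  q ^+ (sumn lam + 2 * nlam lam)%N *
  \prod_(1 <= i < (sumn lam).+1)
     \prod_(1 <= j < (count_mem i lam).+1) (1 - q ^- j).

Definition numer (q : rat) (lam : seq nat) : rat :=
  \prod_(1 <= s < size lam) (1 - q ^+ s).

(* Main.v *)
Require Import Defs.
From mathcomp Require Import all_boot all_order all_algebra.
From mathcomp Require Import ring lra zify.
Import GRing.Theory Num.Theory.

Definition ispart (l : seq nat) := sorted geq l && all (fun x => 0 < x) l.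
Definition col (m : nat) (mu : seq nat) := map S mu ++ nseq (m - size mu) 1.

Fixpoint pl (f n m : nat) : seq (seq nat) :=
  match m, f with
  | 0, _ => if n == 0 then [:: [::]] else [::]
  | _.+1, 0 => [::]
  | _.+1, f'.+1 => if m <= n then
       map (col m) (flatten [seq pl f' (n - m) k | k <- iota 0 m.+1]) else [::]
  end.

Lemma pl0 f n : pl f n 0 = if n == 0 then [:: [::]] else [::].
Proof. by case: f. Qed.

Lemma geq_tr : transitive geq.
Proof. move=> a b c /= h1 h2; lia. Qed.

Lemma size_le_sumn l : all (fun x => 0 < x) l -> size l <= sumn l.
Proof. elim: l => //= x l IH /andP[h1 h2]; have := IH h2; lia. Qed.

Lemma mem_le_sumn x l : x \in l -> x <= sumn l.
Proof.
elim: l => //= y l IH; rewrite in_cons => /orP[/eqP->|/IH]; lia.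
Qed.

Lemma sorted_nseq c y : sorted geq (nseq c y).
Proof. by elim: c => //= -[|c] //= ->; rewrite leqnn. Qed.

Lemma path_cat_nseq l c x y : path geq x l -> y <= x -> all (fun z => y <= z) l ->
  path geq x (l ++ nseq c y).
Proof.
elim: l x => [|z l IH] x /=.
  move=> _ h _; case: c => //= c; rewrite h; exact: (sorted_nseq c.+1 y).
move=> /andP[h1 h2] h /andP[h3 h4]; rewrite h1 /=; exact: IH.
Qed.

Lemma sorted_cat_nseq l c y : sorted geq l -> all (fun x => y <= x) l ->
  sorted geq (l ++ nseq c y).
Proof.
case: l => [|x l] /=; first by rewrite sorted_nseq.
move=> h1 /andP[h2 h3]; exact: path_cat_nseq.
Qed.

Lemma sorted_mapS mu : sorted geq (map S mu) = sorted geq mu.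
Proof. by rewrite sorted_map. Qed.

Lemma all_mapS mu : all (fun x => 1 <= x) (map S mu).
Proof. by elim: mu. Qed.

Lemma ispart_col m mu : ispart mu -> ispart (col m mu).
Proof.
move=> /andP[h1 h2]; rewrite /ispart /col; apply/andP; split.
  by apply: sorted_cat_nseq; rewrite ?sorted_mapS ?all_mapS.
by rewrite all_cat all_mapS all_nseq orbT.
Qed.

Lemma size_col m mu : size mu <= m -> size (col m mu) = m.
Proof. rewrite /col size_cat size_map size_nseq; lia. Qed.

Lemma sumn_nseq1 c : sumn (nseq c 1) = c.
Proof. by elim: c => //= c ->. Qed.

Lemma sumn_mapS mu : sumn (map S mu) = sumn mu + size mu.
Proof. elim: mu => //= x mu ->; lia. Qed.

Lemma sumn_col m mu : size mu <= m -> sumn (col m mu) = sumn mu + m.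
Proof. rewrite /col sumn_cat sumn_mapS sumn_nseq1; lia. Qed.

Definition uncol (l : seq nat) := map predn (filter (fun x => 1 < x) l).

Lemma colK m mu : all (fun x => 0 < x) mu -> uncol (col m mu) = mu.
Proof.
rewrite /uncol /col filter_cat filter_nseq /= cats0.
elim: mu => //= x mu IH /andP[h1 h2]; rewrite ltnS h1 /= IH //.
Qed.

Lemma col_inj m mu1 mu2 : all (fun x => 0 < x) mu1 -> all (fun x => 0 < x) mu2 ->
  col m mu1 = col m mu2 -> mu1 = mu2.
Proof. by move=> h1 h2 e; rewrite -(colK m mu1 h1) e (colK m mu2 h2). Qed.

Lemma ispart_cons x l : ispart (x :: l) ->
  [/\ ispart l, 0 < x & all (fun y => y <= x) l].
Proof.
rewrite /ispart /= (path_sortedE geq_tr) => /andP[/andP[h1 h2] /andP[h3 h4]].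
by rewrite h2 h3 h4.
Qed.

Lemma uncolK l : ispart l -> l = col (size l) (uncol l).
Proof.
elim: l => //= x l IH /ispart_cons[hl hx hall].
rewrite /uncol /=; case: ifP => hx1.
  rewrite /= /col /= subSS -/(col (size l) (uncol l)) -IH //; congr (_ :: _); lia.
have x1 : x = 1 by lia.
have l1 : all (pred1 1) l.
  move: hl => /andP[_ hp]; apply/allP => y hy /=.
  have := allP hp y hy; have := allP hall y hy; lia.
move/all_pred1P: l1 => ->; by rewrite filter_nseq /= /col /= size_nseq x1.
Qed.

Lemma ispart_uncol l : ispart l -> ispart (uncol l).
Proof.
move=> /andP[h1 h2]; rewrite /ispart /uncol; apply/andP; split.
  rewrite sorted_map; apply: (sub_sorted _ (sorted_filter geq_tr _ h1)).
  move=> a b /=; lia.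
rewrite all_map; apply/allP => x; rewrite mem_filter /= => /andP[h _]; lia.
Qed.

Lemma plS f n m : pl f.+1 n m.+1 = if m.+1 <= n then
  map (col m.+1) (flatten [seq pl f (n - m.+1) k | k <- iota 0 m.+2]) else [::].
Proof. by []. Qed.

Lemma pl_mem f n m l : n <= f ->
  (l \in pl f n m) = [&& ispart l, sumn l == n & size l == m].
Proof.
elim: f n m l => [|f IH] n m l hn; (case: m => [|m];
  first by rewrite pl0; case: n {hn} => [|n] /=; case: l => [|x l] //=; rewrite !andbF).
  rewrite in_nil; symmetry; apply/negP => /and3P[hp /eqP hs /eqP hz].
  have := size_le_sumn l (proj2 (andP hp)); rewrite hz hs; lia.
rewrite plS; case: ifP => hmn; last first.
  rewrite in_nil; symmetry; apply/negP => /and3P[hp /eqP hs /eqP hz].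
  have := size_le_sumn l (proj2 (andP hp)); rewrite hz hs; lia.
apply/mapP/idP.
  move=> [mu /flatten_mapP[k hk hmu] ->].
  rewrite IH in hmu; last lia.
  move: hmu hk => /and3P[hp /eqP hs /eqP hz]; rewrite mem_iota => hk.
  have hk' : size mu <= m.+1 by rewrite hz; lia.
  rewrite ispart_col // size_col ?sumn_col // eqxx andbT; apply/eqP; lia.
move=> /and3P[hp /eqP hs /eqP hz].
exists (uncol l); last by rewrite -hz -(uncolK l hp).
have e := uncolK l hp.
have hsz : size (uncol l) <= m.+1.
  have h2 : size (col (size l) (uncol l)) = size (uncol l) + (size l - size (uncol l)).
    by rewrite /col size_cat size_map size_nseq.
  have := congr1 size e; rewrite h2 hz; lia.
apply/flatten_mapP; exists (size (uncol l)); first by rewrite mem_iota; lia.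
rewrite IH; last lia.
rewrite ispart_uncol //= eqxx andbT.
have := congr1 sumn e; rewrite sumn_col; last by rewrite hz.
rewrite hs hz => h; apply/eqP; lia.
Qed.

Lemma uniq_flatten_size (F : nat -> seq (seq nat)) s :
  uniq s -> (forall k, uniq (F k)) -> (forall k x, x \in F k -> size x = k) ->
  uniq (flatten (map F s)).
Proof.
elim: s => //= k s IH /andP[hk hs] hF hsz.
rewrite cat_uniq hF IH // andbT /=; apply/hasPn => x /flatten_mapP[k' hk' hx].
apply/negP => hx'; move: hk; rewrite -(hsz _ _ hx') (hsz _ _ hx) hk'.
by [].
Qed.

Lemma pl_uniq f n m : n <= f -> uniq (pl f n m).
Proof.
elim: f n m => [|f IH] n m hn; (case: m => [|m];
  first by rewrite pl0; case: (n == 0)) => //.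
rewrite plS; case: ifP => // hmn.
rewrite map_inj_in_uniq.
  apply: uniq_flatten_size; first exact: iota_uniq.
    move=> k; apply: IH; lia.
  move=> k x; rewrite pl_mem; last lia.
  by move=> /and3P[_ _ /eqP].
move=> x y /flatten_mapP[k1 _ hx] /flatten_mapP[k2 _ hy].
rewrite pl_mem in hx; last lia.
rewrite pl_mem in hy; last lia.
apply: col_inj.
  by move: hx => /and3P[/andP[]].
by move: hy => /and3P[/andP[]].
Qed.

Definition PL n := flatten [seq pl n n m | m <- iota 0 n.+1].

Lemma PL_uniq n : uniq (PL n).
Proof.
apply: uniq_flatten_size; first exact: iota_uniq.
  by move=> k; apply: pl_uniq.
by move=> k x; rewrite pl_mem // => /and3P[_ _ /eqP].
Qed.

Lemma PL_mem n l : (l \in PL n) = ispart l && (sumn l == n).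
Proof.
apply/flatten_mapP/idP.
  by move=> [m _]; rewrite pl_mem // => /and3P[-> -> _].
move=> /andP[hp /eqP hs]; exists (size l).
  rewrite mem_iota /=; have := size_le_sumn l (proj2 (andP hp)); rewrite hs; lia.
by rewrite pl_mem // hp hs !eqxx.
Qed.

Lemma dec0 s : sorted geq s ->
  s = filter (fun x => 0 < x) s ++ nseq (size s - size (filter (fun x => 0 < x) s)) 0.
Proof.
elim: s => //= x s IH; rewrite (path_sortedE geq_tr) => /andP[hall hs].
case: ifP => hx.
  by rewrite /= subSS -IH.
have s0 : all (pred1 0) s.
  apply/allP => y hy /=; have := allP hall y hy; rewrite /= in hx *; lia.
move/all_pred1P: s0 => ->; rewrite filter_nseq /= size_nseq.
have -> : x = 0 by lia.
by [].
Qed.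

Lemma sumn_nseq0 c : sumn (nseq c 0) = 0.
Proof. by elim: c. Qed.

Definition TS n := [seq parts t | t <- enum (fun t : n.-tuple 'I_n.+1 => is_part_tuple t)].

Lemma partsE n (t : n.-tuple 'I_n.+1) :
  parts t = [seq x <- [seq val i | i <- t] | 0 < x].
Proof. by []. Qed.

Lemma val_parts n (t : n.-tuple 'I_n.+1) : is_part_tuple t ->
  [seq val i | i <- t] = parts t ++ nseq (n - size (parts t)) 0.
Proof.
move=> /andP[hs _]; rewrite {1}(dec0 _ hs) /parts size_map size_tuple.
by [].
Qed.

Lemma TS_uniq n : uniq (TS n).
Proof.
rewrite map_inj_in_uniq ?enum_uniq // => t1 t2.
rewrite !mem_enum => h1 h2 e.
apply: val_inj; apply: (inj_map val_inj).
by rewrite (val_parts _ _ h1) (val_parts _ _ h2) e.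
Qed.

Lemma TS_mem n l : (l \in TS n) = ispart l && (sumn l == n).
Proof.
apply/mapP/idP.
  move=> [t]; rewrite mem_enum => ht ->.
  have e := val_parts _ _ ht; move: ht => /andP[hs /eqP hsum].
  rewrite /ispart /parts sorted_filter //; last exact: geq_tr.
  rewrite filter_all /=; apply/eqP.
  rewrite -[sumn _]/(sumn (parts t)) -[RHS]hsum e sumn_cat sumn_nseq0 addn0 //.
move=> /andP[hp /eqP hs].
have hsz : size l <= n by rewrite -hs; apply: size_le_sumn; case/andP: hp.
set s := l ++ nseq (n - size l) 0.
have hS : size (map (@inord n) s) == n by rewrite size_map size_cat size_nseq subnKC.
have hv : [seq val i | i <- Tuple hS] = s.
  rewrite /= -map_comp; apply: map_id_in => x hx /=.
  apply: inordK; move: hx; rewrite mem_cat => /orP[hx|].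
    by rewrite ltnS -hs; apply: mem_le_sumn.
  by move/nseqP => [-> _].
exists (Tuple hS).
  rewrite mem_enum; change (is_part_tuple (Tuple hS)); rewrite /is_part_tuple hv; apply/andP; split.
    apply: sorted_cat_nseq; first by case/andP: hp.
    by apply/allP.
  by rewrite /s sumn_cat sumn_nseq0 addn0 hs.
rewrite /parts hv /s filter_cat filter_nseq /= cats0.
by apply/esym/all_filterP; case/andP: hp.
Qed.

Lemma sum_tuples n (F : seq nat -> rat) :
  (\sum_(t : n.-tuple 'I_n.+1 | is_part_tuple t) F (parts t) = \sum_(l <- PL n) F l)%R.
Proof.
have hp : perm_eq (TS n) (PL n).
  apply: uniq_perm; [exact: TS_uniq | exact: PL_uniq |].
  by move=> l; rewrite TS_mem PL_mem.
rewrite -(perm_big _ hp) big_map big_enum.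
by [].
Qed.


Definition w (l : seq nat) := (sumn l + 2 * nlam l)%N.

Lemma nlam_cons x l : nlam (x :: l) = (nlam l + sumn l)%N.
Proof.
rewrite /nlam /= big_ord_recl /= mul0n add0n.
have -> : sumn l = (\sum_(i < size l) nth 0 l i)%N.
  by rewrite sumnE (big_nth 0) big_mkord.
rewrite -big_split /=; apply: eq_bigr => i _; rewrite add0n /bump leq0n add1n mulSn; lia.
Qed.

Lemma w_cons x l : w (x :: l) = (x + 2 * sumn l + w l)%N.
Proof. rewrite /w nlam_cons /=; lia. Qed.

Lemma w_nseq1 c : w (nseq c 1) = (c * c)%N.
Proof. elim: c => [|c IH]; first by rewrite /w /nlam big_ord0. rewrite /= w_cons IH sumn_nseq1; lia. Qed.

Lemma w_col0 mu c : w (map S mu ++ nseq c 1) = ((size mu + c) * (size mu + c) + w mu)%N.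
Proof.
elim: mu => [|x mu IH]; first by rewrite /= w_nseq1 /w /nlam big_ord0 addn0.
rewrite /= !w_cons IH sumn_cat sumn_mapS sumn_nseq1; lia.
Qed.

Lemma w_col m mu : (size mu <= m)%N -> w (col m mu) = (m * m + w mu)%N.
Proof. move=> h; rewrite /col w_col0; have -> : (size mu + (m - size mu) = m)%N by lia. by []. Qed.

Lemma count_col1 m mu : all (fun x => 0 < x)%N mu ->
  count_mem 1%N (col m mu) = (m - size mu)%N.
Proof.
rewrite /col count_cat count_nseq /= mul1n => h.
rewrite count_map; have -> : count (preim S (pred1 1%N)) mu = 0%N; last by [].
apply/eqP; rewrite -leqn0 leqNgt -has_count; apply/hasPn => x hx /=.
by have := allP h x hx; case: x {hx}.
Qed.

Lemma count_colS m mu i : count_mem i.+2 (col m mu) = count_mem i.+1 mu.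
Proof.
rewrite /col count_cat count_nseq /= mul0n addn0 count_map.
by apply: eq_count => x /=; rewrite eqSS.
Qed.

Local Open Scope ring_scope.

Definition phi (Q : rat) (c : nat) := \prod_(1 <= j < c.+1) (1 - Q ^- j).
Definition PR (Q : rat) (l : seq nat) (B : nat) := \prod_(1 <= i < B.+1) phi Q (count_mem i l).

Lemma a_lamE Q l : a_lam Q l = Q ^+ w l * PR Q l (sumn l).
Proof. by []. Qed.

Lemma PR_ext Q l B0 B : (forall x, x \in l -> x <= B0)%N -> (B0 <= B)%N ->
  PR Q l B = PR Q l B0.
Proof.
move=> hl hB; rewrite /PR (big_cat_nat _ (n := B0.+1)) //=.
suff -> : \prod_(B0.+1 <= i < B.+1) phi Q (count_mem i l) = 1 by rewrite mulr1.
rewrite big_nat_cond big1 // => i /andP[/andP[h1 h2] _].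
have -> : count_mem i l = 0%N.
  apply/count_memPn/negP => hi; have := hl i hi; lia.
by rewrite /phi big_geq.
Qed.

Lemma PR_col Q m mu B : all (fun x => 0 < x)%N mu ->
  PR Q (col m mu) B.+1 = phi Q (m - size mu) * PR Q mu B.
Proof.
move=> h; rewrite /PR big_nat_recl // count_col1 //; congr (_ * _).
apply: eq_big_nat => i /andP[h1 h2].
by case: i h1 {h2} => // i _; rewrite count_colS.
Qed.

Lemma a_col Q m mu : all (fun x => 0 < x)%N mu -> (size mu <= m)%N -> (0 < m)%N ->
  a_lam Q (col m mu) = Q ^+ (m * m) * phi Q (m - size mu) * a_lam Q mu.
Proof.
move=> hp hs hm; rewrite !a_lamE w_col // sumn_col //.
have -> : (sumn mu + m = (sumn mu + m.-1).+1)%N by lia.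
rewrite PR_col // (PR_ext Q mu (sumn mu)); last by lia.
  by rewrite exprD; ring.
by move=> x hx; apply: mem_le_sumn.
Qed.

Local Open Scope ring_scope.

Definition P (r : rat) (c : nat) := \prod_(1 <= j < c.+1) (1 - r ^+ j).
Definition G (r : rat) (n k : nat) :=
  if (k <= n)%N then P r n / (P r k * P r (n - k)) else 0.

Lemma P0 r : P r 0 = 1.
Proof. by rewrite /P big_geq. Qed.

Lemma PS r c : P r c.+1 = P r c * (1 - r ^+ c.+1).
Proof. by rewrite /P big_nat_recr. Qed.

Lemma P_neq0 r c : (forall j, (0 < j)%N -> r ^+ j != 1) -> P r c != 0.
Proof.
move=> hr; elim: c => [|c IH]; first by rewrite P0 oner_neq0.
rewrite PS mulf_neq0 // subr_eq0 eq_sym; exact: hr.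
Qed.

Lemma G_def r n k : (k <= n)%N -> G r n k = P r n / (P r k * P r (n - k)).
Proof. by move=> h; rewrite /G h. Qed.

Lemma G_gt r n k : (n < k)%N -> G r n k = 0.
Proof. by move=> h; rewrite /G leqNgt h. Qed.

Lemma G_nn r n : (forall j, (0 < j)%N -> r ^+ j != 1) -> G r n n = 1.
Proof.
move=> hr; rewrite G_def // subnn P0 mulr1 divff //; exact: P_neq0.
Qed.

Lemma G_n0 r n : (forall j, (0 < j)%N -> r ^+ j != 1) -> G r n 0 = 1.
Proof.
move=> hr; rewrite G_def // subn0 P0 mul1r divff //; exact: P_neq0.
Qed.

Lemma G_sym r n k : (k <= n)%N -> G r n (n - k) = G r n k.
Proof.
move=> h; rewrite (G_def r n (n - k) (leq_subr k n)) (G_def r n k h) subKn //; congr (_ / _); exact: mulrC.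
Qed.

Lemma G_pascal r n k : (forall j, (0 < j)%N -> r ^+ j != 1) ->
  G r n.+1 k.+1 = G r n k + r ^+ k.+1 * G r n k.+1.
Proof.
move=> hr; have hP := fun c => P_neq0 r c hr.
case: (ltngtP k n) => hkn.
- have [d ->] : exists d, n = (k.+1 + d)%N by exists (n - k.+1)%N; lia.
  rewrite !G_def; try lia.
  have -> : ((k.+1 + d).+1 - k.+1 = d.+1)%N by lia.
  have -> : ((k.+1 + d) - k = d.+1)%N by lia.
  have -> : ((k.+1 + d) - k.+1 = d)%N by lia.
  rewrite (PS r (k.+1 + d)) (PS r k) (PS r d).
  have -> : r ^+ (k.+1 + d).+1 = r ^+ k.+1 * r ^+ d.+1 by rewrite -exprD addnS.
  have h1 : 1 - r ^+ k.+1 != 0 by rewrite subr_eq0 eq_sym hr.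
  have h2 : 1 - r ^+ d.+1 != 0 by rewrite subr_eq0 eq_sym hr.
  have h3 := hP k; have h4 := hP d.
  by field; rewrite h1 h2 h3 h4.
- by rewrite !G_gt ?mulr0 ?addr0 //; lia.
- subst k; rewrite (G_nn r n.+1 hr) (G_nn r n hr) (G_gt r n n.+1) // mulr0 addr0 //.
Qed.

Lemma vdm r A B K : (forall j, (0 < j)%N -> r ^+ j != 1) ->
  G r (A + B) K = \sum_(i < K.+1) G r A i * G r B (K - i) * r ^+ (i * (B + i - K)).
Proof.
move=> hr; elim: B K => [|B IH] K.
  rewrite addn0 big_ord_recr /= subnn (G_n0 r 0 hr) big1 ?add0r.
    by rewrite muln0 expr0 !mulr1.
  move=> i _; rewrite (G_gt r 0 (K - i)) ?mulr0 ?mul0r //=.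
  have := ltn_ord i; lia.
case: K => [|K].
  rewrite big_ord_recr big_ord0 /= add0r !(G_n0 r _ hr) mul0n expr0 !mulr1 //.
rewrite addnS (G_pascal r _ _ hr) !IH.
rewrite [in X in _ = X]big_ord_recr /=.
rewrite [in X in _ + _ * X]big_ord_recr /= mulrDr addrA.
congr (_ + _).
  rewrite mulr_sumr -big_split /=; apply: eq_bigr => i _.
  have hi : (i <= K)%N by have := ltn_ord i; lia.
  have -> : (K.+1 - i = (K - i).+1)%N by lia.
  have -> : (B.+1 + i - K.+1 = B + i - K)%N by lia.
  rewrite (G_pascal r _ _ hr).
  case: (leqP (K - i).+1 B) => hB.
    have E : r ^+ (K - i).+1 * r ^+ (i * (B + i - K)) = r ^+ K.+1 * r ^+ (i * (B + i - K.+1)).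
      rewrite -!exprD; congr (_ ^+ _).
      have -> : (B + i - K = (B + i - K.+1).+1)%N by lia.
      rewrite mulnS; lia.
    symmetry; transitivity (G r A i * G r B (K - i) * r ^+ (i * (B + i - K)) +
      G r A i * G r B (K - i).+1 * (r ^+ (K - i).+1 * r ^+ (i * (B + i - K)))); first by ring.
    by rewrite E; ring.
  by rewrite (G_gt r B (K - i).+1) //; ring.
rewrite subnn (G_n0 r _ hr) (G_n0 r _ hr) !mulr1 mulrCA -exprD.
congr (_ * _ ^+ _); lia.
Qed.

Definition Cc (r : rat) (n m : nat) :=
  if n == 0%N then (m == 0%N)%:R
  else if m == 0%N then 0 else r ^+ (n + m * m.-1) * G r n.-1 m.-1 / P r m.

Lemma rec r m N : (forall j, (0 < j)%N -> r ^+ j != 1) -> (0 < m)%N ->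
  \sum_(k < m.+1) r ^+ (m * m) / P r (m - k) * Cc r N k = Cc r (N + m) m.
Proof.
move=> hr; have hP := fun c => P_neq0 r c hr.
case: m => // c _.
case: N => [|N].
  rewrite big_ord_recl big1 ?addr0; last by move=> i _; rewrite /Cc /= mulr0.
  rewrite /Cc /= add0n mulr1 subn0 (G_nn r c hr) mulr1.
  by rewrite mulnS.
rewrite big_ord_recl /Cc /= mulr0 add0r.
rewrite (vdm r N c.+1 c hr) mulr_sumr mulr_suml.
apply: eq_bigr => i _.
have hi : (i <= c)%N by have := ltn_ord i; lia.
rewrite /bump /= !add0n add1n subSS.
have -> : G r c.+1 (c - i) = G r c.+1 i.+1.
  by rewrite -(G_sym r c.+1 i.+1) // subSS.
have -> : (c.+1 + i - c = i.+1)%N by lia.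
rewrite (G_def r c.+1 i.+1) // subSS.
rewrite (mulnC i) -addnA -mulnS !exprD.
have h1 := hP (c - i); have h2 := hP i.+1; have h3 := hP c.+1.
move: h1 h2 h3; set a := P r (c - i); set b := P r i.+1; set d := P r c.+1 => h1 h2 h3.
by field; apply/and3P; split => //; exact: hP.
Qed.

Definition cq (Q : rat) (m : nat) := \prod_(1 <= s < m) (1 - Q ^+ s).

Lemma binS2 j : 'C(j.+2, 2) = ('C(j.+1, 2) + j.+1)%N.
Proof. by rewrite binS bin1. Qed.

Lemma bin2x j : ('C(j.+1, 2) + 'C(j.+1, 2) = j.+1 * j)%N.
Proof.
elim: j => [|j IH]; first by [].
rewrite binS2; lia.
Qed.

Lemma cP Q j : Q != 0 -> cq Q j.+1 * (Q^-1) ^+ 'C(j.+1, 2) = (-1) ^+ j * P Q^-1 j.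
Proof.
move=> hQ; elim: j => [|j IH].
  by rewrite /cq big_geq // P0 bin_small // expr0 !mulr1.
rewrite /cq big_nat_recr //= -/(cq Q j.+1) binS2 exprD PS.
transitivity ((cq Q j.+1 * Q^-1 ^+ 'C(j.+1, 2)) * ((1 - Q ^+ j.+1) * Q^-1 ^+ j.+1)); first by ring.
rewrite IH exprVn [(-1) ^+ j.+1]exprS.
have hQj : Q ^+ j.+1 != 0 by rewrite expf_neq0.
move: hQj; set x := Q ^+ j.+1 => hQj.
by field.
Qed.

Lemma alt r n : (forall j, (0 < j)%N -> r ^+ j != 1) ->
  \sum_(j < n.+1) (-1) ^+ j * r ^+ 'C(j.+1, 2) * G r n.+1 j.+1 = 1.
Proof.
move=> hr.
set U := \sum_(k < n.+2) (-1) ^+ k * r ^+ 'C(k.+1, 2) * G r n k.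
have U1 : U = \sum_(j < n.+1) (-1) ^+ j * r ^+ 'C(j.+1, 2) * G r n j.
  by rewrite /U big_ord_recr /= (G_gt r n n.+1) // mulr0 addr0.
have U2 : U = 1 - \sum_(j < n.+1) (-1) ^+ j * r ^+ 'C(j.+1, 2) * (r ^+ j.+1 * G r n j.+1).
  rewrite /U big_ord_recl /= expr0 (G_n0 r n hr) bin_small // expr0 !mul1r.
  rewrite -sumrN; congr (_ + _); apply: eq_bigr => i _.
  rewrite /bump /= add1n binS2 exprD [(-1) ^+ _.+1]exprS; ring.
under eq_bigr do rewrite (G_pascal r _ _ hr) mulrDr.
rewrite big_split /= -U1.
have -> : forall a b : rat, a = 1 - b -> a + b = 1 by move=> a b ->; ring.
  by [].
exact: U2.
Qed.

Lemma final Q n : Q != 0 -> (forall j, (0 < j)%N -> Q^-1 ^+ j != 1) -> (0 < n)%N ->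
  \sum_(m < n.+1) cq Q m * Cc Q^-1 n m = 1 / (Q ^+ n - 1).
Proof.
move=> hQ hr; set r := Q^-1; have hP := fun c => P_neq0 r c hr.
case: n => // n _.
rewrite big_ord_recl /Cc /= mulr0 add0r.
have hrn : 1 - r ^+ n.+1 != 0 by rewrite subr_eq0 eq_sym hr.
transitivity (r ^+ n.+1 / (1 - r ^+ n.+1) *
  \sum_(j < n.+1) (-1) ^+ j * r ^+ 'C(j.+1, 2) * G r n.+1 j.+1); last first.
  rewrite alt // mulr1 /r exprVn.
  have hQn : Q ^+ n.+1 != 0 by rewrite expf_neq0.
  have hQn1 : Q ^+ n.+1 - 1 != 0.
    by rewrite subr_eq0; apply: contra (hr n.+1 isT) => /eqP e; rewrite /r exprVn e invr1.
  move: hQn hQn1; set x := Q ^+ n.+1 => hQn hQn1.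
  by field; rewrite hQn1.
rewrite mulr_sumr; apply: eq_bigr => j _.
have hj : (j <= n)%N by have := ltn_ord j; lia.
rewrite /bump /= !add1n !add0n.
have e : (n.+1 + j.+1 * j = n.+1 + 'C(j.+1, 2) + 'C(j.+1, 2))%N by rewrite -addnA bin2x.
rewrite e 2!exprD.
transitivity ((cq Q j.+1 * r ^+ 'C(j.+1, 2)) * r ^+ n.+1 * r ^+ 'C(j.+1, 2) * G r n j / P r j.+1);
  first by ring.
rewrite cP // (G_def r n j hj) (G_def r n.+1 j.+1) // subSS (PS r n).
have h1 := hP j; have h2 := hP (n - j); have h3 := hP j.+1; have h4 := hP n.
move: h1 h2 h3 h4 hrn; set a := P r j; set b := P r (n - j); set c := P r j.+1;
  set d := P r n; set y := r ^+ n.+1 => h1 h2 h3 h4 hrn.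
field; apply/and4P; split => //; exact: hP.
Qed.

Local Open Scope ring_scope.

Lemma phiP Q c : phi Q c = P Q^-1 c.
Proof. by rewrite /phi /P; apply: eq_bigr => j _; rewrite exprVn. Qed.

Lemma a_nil Q : a_lam Q [::] = 1.
Proof. by rewrite /a_lam /nlam big_ord0 /= big_geq // mulr1. Qed.

Lemma Hc Q f n m : Q != 0 -> (forall j, (0 < j)%N -> Q^-1 ^+ j != 1) -> (n <= f)%N ->
  \sum_(l <- pl f n m) (a_lam Q l)^-1 = Cc Q^-1 n m.
Proof.
move=> hQ hr; set r := Q^-1.
elim: f n m => [|f IH] n m hn; (case: m => [|m];
  first by rewrite pl0 /Cc; case: n {hn} => [|n] /=;
    rewrite ?big_cons ?big_nil ?addr0 ?a_nil ?invr1).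
  have -> : n = 0%N by lia.
  by rewrite big_nil /Cc.
rewrite plS; case: ifP => hmn; last first.
  rewrite big_nil /Cc; case: ifP => // hn0.
  by rewrite (G_gt r n.-1 m) ?mulr0 ?mul0r //; lia.
rewrite big_map big_flatten big_map.
transitivity (\sum_(k <- iota 0 m.+2) r ^+ (m.+1 * m.+1) / P r (m.+1 - k) * Cc r (n - m.+1) k).
  rewrite big_seq [RHS]big_seq; apply: eq_bigr => k hk.
  rewrite -(IH (n - m.+1)%N k); last lia.
  rewrite mulr_sumr !big_seq; apply: eq_bigr => mu hmu.
  move: hmu; rewrite pl_mem; last lia.
  move=> /and3P[hp _ /eqP hs]; move: hk; rewrite mem_iota => hk.
  rewrite a_col //; last by rewrite hs; lia.
    by rewrite hs phiP !invfM -exprVn.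
  by case/andP: hp.
rewrite -[iota 0 m.+2]/(index_iota 0 m.+2) big_mkord rec //.
by rewrite subnK.
Qed.

Theorem lemma6p2 (q n : nat) :
  prime_power q -> (1 <= n)%N ->
  \sum_(t : n.-tuple 'I_n.+1 | is_part_tuple t)
     numer q%:R (parts t) / a_lam q%:R (parts t)
  = 1 / ((q%:R : rat) ^+ n - 1).
Proof.
move=> [p [k [hp hk ->]]] hn.
have hq : (1 < p ^ k)%N.
  have := prime_gt1 hp; case: k hk => // k _ h.
  by rewrite expnS; have := expn_gt0 p k; rewrite (ltnW h) /=; nia.
set Q : rat := (p ^ k)%:R.
have hQ : Q != 0 by rewrite pnatr_eq0; lia.
have hr : forall j, (0 < j)%N -> Q^-1 ^+ j != 1.
  move=> j hj; rewrite exprVn invr_eq1 -natrX pnatr_eq1 -expnM.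
  have : (1 < p ^ (k * j))%N.
    rewrite expnM; case: j hj => // j _; rewrite expnS.
    have : (0 < (p ^ k) ^ j)%N by rewrite expn_gt0; lia.
    nia.
  lia.
have := sum_tuples n (fun l => numer Q l / a_lam Q l); rewrite /= => ->.
rewrite /PL big_flatten big_map.
transitivity (\sum_(m <- iota 0 n.+1) cq Q m * Cc Q^-1 n m).
  apply: eq_bigr => m _.
  rewrite -(Hc Q n n m) // mulr_sumr !big_seq; apply: eq_bigr => l hl.
  move: hl; rewrite pl_mem // => /and3P[_ _ /eqP <-].
  by [].
by rewrite -[iota 0 n.+1]/(index_iota 0 n.+1) big_mkord final.
Qed.
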